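(* Let $\mathcal{A}\subseteq M_n(\mathbb{C})$ be logmodular. Then there are complex numbers $\alpha_{ij},\beta_{ij}$, $i,j\in\{1,\dots,n\}$, such that every row of the matrix $[\alpha_{ij}]$ is non-zero, every column of the matrix $[\beta_{ij}]$ is non-zero, and for every $i,j\in\{1,\dots,n\}$ $$\sum_{k=1}^n \alpha_{ik}E_{i,k}\in\mathcal{A},\qquad \sum_{k=1}^n \beta_{kj}E_{k,j}\in\mathcal{A}.$$
   Context: $E_{i,j}$ denote the matrix units of $M_n(\mathbb{C})$. A unital subalgebra $\mathcal{A}\subseteq M_n(\mathbb{C})$ (containing the identity $1_n$) is called logmodular (in $M_n(\mathbb{C})$) if the set $\{a^*a : a\in\mathcal{A}^{-1}\}$ is dense in the set of positive invertible matrices in $M_n(\mathbb{C})$, where $\mathcal{A}^{-1}$ denotes the set of elements of $\mathcal{A}$ invertible in $\mathcal{A}$. *)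

(* Defs.v *)
(* Complex numbers are modelled by an arbitrary
   numClosedFieldType C (e.g. algC). *)
From HB Require Import structures.
From mathcomp Require Import all_boot all_order all_algebra.
Set Implicit Arguments. Unset Strict Implicit. Unset Printing Implicit Defensive.
Import Order.TTheory GRing.Theory Num.Theory.
Local Open Scope ring_scope.

Definition adjmx (C : numClosedFieldType) (m n : nat) (a : 'M[C]_(m, n)) : 'M[C]_(n, m) :=
  (map_mx Num.conj a)^T.

Definition unital_subalgebra (C : numClosedFieldType) (n : nat)
    (A : {pred 'M[C]_n}) : Prop :=
  [/\ (1%:M : 'M[C]_n) \in A,
      (forall (c : C) (x y : 'M[C]_n), x \in A -> y \in A -> c *: x + y \in A)
    & (forall x y : 'M[C]_n, x \in A -> y \in A -> x *m y \in A)].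

Definition inv_in (C : numClosedFieldType) (n : nat) (A : {pred 'M[C]_n})
    (a : 'M[C]_n) : Prop :=
  a \in A /\ exists2 b, b \in A & a *m b = 1%:M /\ b *m a = 1%:M.

Definition pos_inv (C : numClosedFieldType) (n : nat) (P : 'M[C]_n) : Prop :=
  [/\ adjmx P = P,
      (forall v : 'cV[C]_n, 0 <= (adjmx v *m P *m v) 0 0)
    & P \in unitmx].

(* logmodular: {a^* a : a \in A^{-1}} is dense (entrywise / any norm topology
   on the finite-dimensional space M_n(C)) in the positive invertible matrices *)
Definition logmodular (C : numClosedFieldType) (n : nat) (A : {pred 'M[C]_n}) : Prop :=
  unital_subalgebra A /\
  forall P : 'M[C]_n, pos_inv P ->
    forall eps : C, 0 < eps ->
      exists2 a, inv_in A a &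
        forall i j, `|(adjmx a *m a - P) i j| < eps.

(* Main.v *)
Require Import Defs.
From HB Require Import structures.
From mathcomp Require Import all_boot all_order all_algebra.
From mathcomp Require Import ring.
From Stdlib Require Import Classical.
Set Implicit Arguments. Unset Strict Implicit. Unset Printing Implicit Defensive.
Import Order.TTheory GRing.Theory Num.Theory.
Local Open Scope ring_scope.

Section Span.
Variables (F : fieldType) (n : nat) (A : {pred 'M[F]_n}).
Hypothesis H0 : 0 \in A.
Hypothesis Hlin : forall (c : F) (x y : 'M[F]_n), x \in A -> y \in A -> c *: x + y \in A.

Definition goodS d (S : 'M[F]_(d, n * n)) := forall c : 'rV_d, vec_mx (c *m S) \in A.

Lemma span_exists : exists d (S : 'M[F]_(d, n * n)),
  goodS S /\ forall x, x \in A -> (mxvec x <= S)%MS.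
Proof.
suff H : forall k, (exists d (S : 'M[F]_(d, n * n)),
  goodS S /\ forall x, x \in A -> (mxvec x <= S)%MS) \/
  exists d (S : 'M[F]_(d, n * n)), goodS S /\ (k <= \rank S)%N.
  case: (H (n * n).+1) => // -[d [S [_ HS]]].
  by have := rank_leq_col S; rewrite leqNgt HS.
elim=> [|k IH].
  right; exists 0%N, 0; split=> // c; by rewrite mulmx0 linear0.
case: IH => [|[d [S [gS Hk]]]]; first by left.
case: (classic (forall x, x \in A -> (mxvec x <= S)%MS)) => [Hall|Hn].
  by left; exists d, S.
have [x [xA xS]] : exists x, x \in A /\ ~~ (mxvec x <= S)%MS.
  apply: NNPP => Hc; apply: Hn => x xA; apply: NNPP => xS.
  by apply: Hc; exists x; split => //; apply/negP.
right; exists (d + 1)%N, (col_mx S (mxvec x)); split.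
  move=> c; rewrite -[c]hsubmxK mul_row_col linearD /=.
  rewrite [rsubmx c]mx11_scalar mul_scalar_mx linearZ /= mxvecK addrC.
  exact: Hlin.
have sS : (S <= col_mx S (mxvec x))%MS by rewrite -addsmxE addsmxSl.
rewrite (leq_trans _ (_ : \rank S < \rank (col_mx S (mxvec x)))%N) //.
rewrite (ltn_leqif (mxrank_leqif_sup sS)).
apply/negP => H; move/negP: xS; apply.
by apply: submx_trans H; rewrite -addsmxE addsmxSr.
Qed.

Lemma dichot (f : {linear 'M[F]_n -> 'M[F]_n}) :
  (exists x, x \in A /\ x != 0 /\ f x = 0) \/
  exists W : 'M[F]_(n * n, n * n), forall x, x \in A -> mxvec x = mxvec (f x) *m W.
Proof.
have [d [S [gS sS]]] := span_exists.
pose B := S *m lin_mx f.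
case: (classic (exists c : 'rV_d, c *m S != 0 /\ c *m B = 0)) => [[c [cS cB]]|Hn].
  left; exists (vec_mx (c *m S)); split; first exact: gS.
  split.
    by apply: contra cS => /eqP H; rewrite -[c *m S]vec_mxK H linear0.
  apply: (can_inj mxvecK); rewrite -mul_vec_lin vec_mxK -mulmxA -/B cB.
  by rewrite linear0.
right; exists (pinvmx B *m S) => x xA.
have ex : mxvec x = (mxvec x *m pinvmx S) *m S by rewrite mulmxKpV // sS.
set c := mxvec x *m pinvmx S in ex.
have ey : mxvec (f x) = c *m B by rewrite -mul_vec_lin ex /B mulmxA.
have eB : mxvec (f x) *m pinvmx B *m B = mxvec (f x) by rewrite mulmxKpV // ey submxMl.
have H : (c - mxvec (f x) *m pinvmx B) *m S = 0.
  apply: NNPP => Hne; apply: Hn; exists (c - mxvec (f x) *m pinvmx B); split.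
    exact/eqP.
  by rewrite mulmxBl eB -ey subrr.
by rewrite mulmxA ex; apply/eqP; rewrite -subr_eq0 -mulmxBl H.
Qed.
End Span.

Lemma bound_from_W (R : numFieldType) (n : nat) (W : 'M[R]_(n * n, n * n)) :
  exists2 K : R, 0 <= K & forall (x y : 'M[R]_n) (B : R), 0 <= B ->
    mxvec x = mxvec y *m W -> (forall p q, `|y p q| <= B) ->
    forall p q, `|x p q| <= B * K.
Proof.
exists (\sum_m \sum_l `|W m l|).
  by apply: sumr_ge0 => m _; apply: sumr_ge0.
move=> x y B B0 exy Hy p q.
rewrite -mxvecE exy mxE.
apply: (le_trans (ler_norm_sum _ _ _)).
rewrite mulr_sumr; apply: ler_sum => m _.
rewrite normrM; apply: ler_pM => //.
  by case/mxvec_indexP: m => p' q'; rewrite mxvecE.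
by rewrite (bigD1 (mxvec_index p q)) //= ler_wpDr //; apply: sumr_ge0.
Qed.

Lemma eq_le' (R : numDomainType) (x y : R) : x = y -> x <= y.
Proof. by move->. Qed.

Lemma arith1 (R : numFieldType) (m u : R) : 0 <= m -> 0 <= u ->
  u <= m * (2 + u / (2 * m + 1)) -> u / (2 * m + 1) <= 2.
Proof.
move=> m0 u0 H.
have N0 : 0 < 2 * m + 1 by rewrite ltr_wpDl // mulr_ge0 // ler0n.
rewrite ler_pdivrMr //.
have H1 : u * (2 * m + 1) <= m * (2 * (2 * m + 1)) + m * u.
  rewrite -(ler_pM2r N0) in H; apply: le_trans H _; apply: eq_le'.
  by field; rewrite lt0r_neq0.
have H2 : u * (m + 1) <= (2 * (2 * m + 1)) * (m + 1).
  have -> : u * (m + 1) = u * (2 * m + 1) - m * u by ring.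
  rewrite lerBlDr; apply: le_trans H1 _; rewrite lerD2r.
  rewrite mulrC; apply: ler_wpM2l; first by rewrite mulr_ge0 // ltW.
  by rewrite lerDl.
by rewrite -(ler_pM2r (_ : 0 < m + 1)) // ltr_wpDl.
Qed.

Lemma arith2 (R : numFieldType) (x : R) : 0 < x -> 2 * (4 * x)^-1 < x^-1.
Proof.
move=> x0; have x4 : 0 < 4 * x by rewrite mulr_gt0.
rewrite ltr_pdivrMr //.
have -> : x^-1 * (4 * x) = 4 by field; rewrite lt0r_neq0.
by rewrite ltr_nat.
Qed.

Section Main.
Variables (C : numClosedFieldType) (n : nat).

Lemma pos_inv_diag (d : 'rV[C]_n) : (forall k, 0 < d 0 k) -> pos_inv (diag_mx d).
Proof.
move=> dpos; split.
- apply/matrixP => p q; rewrite /adjmx !mxE rmorphMn /=.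
  case: (eqVneq q p) => [->|qp]; last by rewrite !mulr0n.
  by rewrite conj_Creal // gtr0_real.
- move=> v; rewrite mul_mx_diag mxE; apply: sumr_ge0 => k _.
  rewrite !mxE /= mulrAC -normCKC.
  by rewrite mulr_ge0 ?exprn_ge0 // ltW.
- by rewrite unitmxE det_diag unitfE lt0r_neq0 // prodr_gt0.
Qed.

Lemma mulmx_delta_r (x : 'M[C]_n) j p q :
  (x *m delta_mx j j) p q = if q == j then x p j else 0.
Proof.
rewrite mxE (bigD1 j) //= big1 ?addr0 => [|k kj]; rewrite !mxE.
  by rewrite eqxx /= eq_sym; case: eqP; rewrite ?mulr1 ?mulr0.
by rewrite (negbTE kj) mulr0.
Qed.

Lemma mulmx_delta_l (x : 'M[C]_n) i p q :
  (delta_mx i i *m x) p q = if p == i then x i q else 0.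
Proof.
rewrite mxE (bigD1 i) //= big1 ?addr0 => [|k ki]; rewrite !mxE.
  by rewrite eqxx andbT eq_sym; case: eqP; rewrite ?mul1r ?mul0r.
by rewrite (negbTE ki) andbF mul0r.
Qed.

Lemma adjmx_mulE (a : 'M[C]_n) k l :
  (adjmx a *m a) k l = \sum_m (a m k)^* * a m l.
Proof. by rewrite mxE; apply: eq_bigr => m _; rewrite !mxE. Qed.

Lemma adjmx_mul (a b : 'M[C]_n) : adjmx (a *m b) = adjmx b *m adjmx a.
Proof. by rewrite /adjmx map_mxM trmx_mul. Qed.

Lemma adjmx1 : adjmx (1%:M : 'M[C]_n) = 1%:M.
Proof.
apply/matrixP => p q; rewrite /adjmx !mxE rmorphMn /= rmorph1.
by rewrite eq_sym.
Qed.

Lemma Qkk_ge (a : 'M[C]_n) m k : `|a m k| ^+ 2 <= (adjmx a *m a) k k.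
Proof.
rewrite adjmx_mulE (bigD1 m) //= -normCKC ler_wpDr //.
by apply: sumr_ge0 => l _; rewrite -normCKC exprn_ge0.
Qed.

Lemma Qkk_ge0 (a : 'M[C]_n) k : 0 <= (adjmx a *m a) k k.
Proof.
by rewrite adjmx_mulE; apply: sumr_ge0 => l _; rewrite -normCKC exprn_ge0.
Qed.


Lemma lt_upper (Q x e : C) : 0 <= x -> `|Q - x| < e -> `|Q| < x + e.
Proof.
move=> x0 H; rewrite -(subrK x Q); apply: (le_lt_trans (ler_normD _ _)).
by rewrite (ger0_norm x0) addrC ltrD2l.
Qed.

Lemma lt_lower (Q x e : C) : 0 <= Q -> 0 <= x -> `|Q - x| < e -> x - e < Q.
Proof.
move=> Q0 x0 H; rewrite ltrBlDr.
have : `|x| <= `|x - Q| + `|Q| by rewrite -{1}(subrK Q x) ler_normD.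
rewrite (ger0_norm x0) (ger0_norm Q0) distrC => /le_lt_trans; apply.
by rewrite addrC ltrD2l.
Qed.

Lemma diag_kk (d : 'rV[C]_n) k : diag_mx d k k = d 0 k.
Proof. by rewrite !mxE eqxx mulr1n. Qed.

Lemma diag_kl (d : 'rV[C]_n) k l : k != l -> diag_mx d k l = 0.
Proof. by move=> kl; rewrite !mxE (negbTE kl) mulr0n. Qed.

Variable A : {pred 'M[C]_n}.
Hypothesis LA : logmodular A.

Lemma A0 : 0 \in A.
Proof.
case: LA => -[H1 Hl _] _; have := Hl (-1) _ _ H1 H1.
by rewrite scaleN1r addNr.
Qed.

Lemma Alin (c : C) (x y : 'M[C]_n) : x \in A -> y \in A -> c *: x + y \in A.
Proof. by case: LA => -[_ Hl _] _; apply: Hl. Qed.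

Lemma get_a (d : 'rV[C]_n) (eps : C) : (forall k, 0 < d 0 k) -> 0 < eps ->
  exists a b : 'M[C]_n, [/\ a \in A, b \in A, a *m b = 1%:M, b *m a = 1%:M &
    forall k l, `|(adjmx a *m a) k l - diag_mx d k l| < eps].
Proof.
move=> dpos e0; case: LA => _ /(_ _ (pos_inv_diag dpos) eps e0) [a [aA [b bA [ab ba]]] H].
by exists a, b; split => // k l; have := H k l; rewrite !mxE.
Qed.

Lemma col_elem j : exists y, [/\ y \in A, y != 0 & y *m (1%:M - delta_mx j j) = 0].
Proof.
case: (dichot A0 Alin (mulmxr (1%:M - delta_mx j j))) => [[x [xA [x0 fx]]]|[W HW]].
  by exists x.
have [K K0 HK] := bound_from_W W.
pose T : C := (4 * n)%:R * K ^+ 2 + 1.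
have T0 : 0 <= (4 * n)%:R * K ^+ 2 by rewrite mulr_ge0 ?exprn_ge0.
pose d := \row_k (if k == j then T else 1) : 'rV[C]_n.
have dpos : forall k, 0 < d 0 k.
  by move=> k; rewrite mxE; case: eqP => _ //; rewrite ltr_wpDl.
have [a [b [aA bA ab ba Hd]]] := get_a dpos ltr01.
have Ha : forall m k, k != j -> `|a m k| <= 2.
  move=> m k kj; rewrite -(ler_pXn2r (_ : 0 < 2)%N) ?nnegrE //.
  apply: le_trans (Qkk_ge a m k) _.
  have e : diag_mx d k k = 1 by rewrite diag_kk mxE (negbTE kj).
  have H1 := Hd k k; rewrite e in H1; have := lt_upper (@ler01 C) H1.
  rewrite (ger0_norm (Qkk_ge0 _ _)) => /ltW /le_trans; apply.
  by rewrite -[1 + 1]/(2%:R : C) expr2 -natrM ler_nat.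
have Hb : forall p q, `|(mulmxr (1%:M - delta_mx j j) a) p q| <= 2.
  move=> p q; rewrite /= mulmxBr mulmx1 mxE [X in `|_ + X|]mxE mulmx_delta_r.
  case: eqP => [->|/eqP qj]; first by rewrite subrr normr0 ler0n.
  by rewrite subr0 Ha.
have Haj := HK a _ 2 (ler0n _ 2) (HW a aA) Hb.
have Hdj := Hd j j; rewrite diag_kk in Hdj.
have := lt_lower (Qkk_ge0 a j) (ltW (dpos j)) Hdj.
rewrite mxE eqxx /T addrK adjmx_mulE => /lt_le_trans H.
have /H : \sum_m (a m j)^* * a m j <= (4 * n)%:R * K ^+ 2.
  apply: (@le_trans _ _ (\sum_(m < n) (2 * K) ^+ 2)).
    apply: ler_sum => m _; rewrite -normCKC ler_pXn2r ?nnegrE ?mulr_ge0 //.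
  rewrite sumr_const card_ord -mulr_natl natrM.
  by rewrite le_eqVlt; apply/orP; left; apply/eqP; ring.
by rewrite ltxx.
Qed.

Lemma row_elem i : exists x, [/\ x \in A, x != 0 & (1%:M - delta_mx i i) *m x = 0].
Proof.
case: (dichot A0 Alin (mulmx (1%:M - delta_mx i i))) => [[x [xA [x0 fx]]]|[W HW]].
  by exists x.
have [K K0 HK] := bound_from_W W.
pose c : C := (4 * n)%:R * K + 1.
have c0 : 0 < c by rewrite ltr_wpDl // mulr_ge0.
have c1 : 1 <= c by rewrite lerDr mulr_ge0.
pose dl : C := (4 * c ^+ 2)^-1.
have c2 : 0 < 4 * c ^+ 2 by rewrite mulr_gt0 // exprn_gt0.
have dl0 : 0 < dl by rewrite invr_gt0.
have dl1 : dl <= 1.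
  rewrite invf_le1 //; apply: le_trans (exprn_ege1 2 c1) _.
  by rewrite ler_peMl ?exprn_ge0 ?ltW // ltr1n.
pose m : C := n%:R.
pose N : C := 2 * m + 1.
have N0 : 0 < N by rewrite ltr_wpDl // mulr_ge0 // ler0n.
pose eps := dl / N.
have e0 : 0 < eps by rewrite divr_gt0.
have edl : eps <= dl.
  rewrite /eps ler_pdivrMr //; apply: ler_peMr; [exact: ltW | by rewrite lerDr mulr_ge0 ?ler0n].
pose d := \row_k (if k == i then dl else 1) : 'rV[C]_n.
have dpos : forall k, 0 < d 0 k by move=> k; rewrite mxE; case: eqP.
have dle1 : forall k, d 0 k <= 1 by move=> k; rewrite mxE; case: eqP.
have dge : forall k, dl <= d 0 k by move=> k; rewrite mxE; case: eqP.
have [a [b [aA bA ab ba Hd]]] := get_a dpos e0.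
pose Q := adjmx a *m a.
have HQ : forall k, Q k k < d 0 k + eps.
  move=> k; have Hk := Hd k k; rewrite diag_kk in Hk.
  have := lt_upper (ltW (dpos k)) Hk.
  by rewrite (ger0_norm (Qkk_ge0 _ _)).
have Ha : forall m k, `|a m k| <= 2.
  move=> m0 k; rewrite -(ler_pXn2r (_ : 0 < 2)%N) ?nnegrE //.
  apply: le_trans (Qkk_ge a m0 k) _; apply: ltW; apply: lt_le_trans (HQ k) _.
  apply: (@le_trans _ _ (1 + 1)).
    by apply: lerD => //; apply: le_trans edl dl1.
  by rewrite -[1 + 1]/(2%:R : C) expr2 -natrM ler_nat.
have Qb : Q *m b = adjmx a by rewrite -mulmxA ab mulmx1.
pose t (q : 'I_n) := \sum_l `|b l q|.
have F3 : forall k q, d 0 k * `|b k q| <= 2 + eps * t q.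
  move=> k q.
  have E : d 0 k * b k q = (adjmx a) k q - ((Q - diag_mx d) *m b) k q.
    rewrite -Qb mulmxBl mul_diag_mx !mxE.
    by rewrite opprB addrC subrK.
  rewrite -(gtr0_norm (dpos k)) -normrM E.
  apply: le_trans (ler_normB _ _) _; apply: lerD.
    by rewrite !mxE norm_conjC Ha.
  rewrite mxE; apply: le_trans (ler_norm_sum _ _ _) _.
  rewrite /t mulr_sumr; apply: ler_sum => l _; rewrite normrM.
  by apply: ler_wpM2r => //; apply: ltW; move: (Hd k l); rewrite !mxE.
have F4 : forall q, eps * t q <= 2.
  move=> q; have t0 : 0 <= t q by apply: sumr_ge0.
  have -> : eps * t q = (dl * t q) / N by rewrite /eps mulrAC.
  apply: arith1; first by rewrite ler0n.
    by rewrite mulr_ge0 // ltW.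
  have -> : dl * t q / N = eps * t q by rewrite /eps mulrAC.
  rewrite [in X in X <= _]/t mulr_sumr.
  apply: (@le_trans _ _ (\sum_(k < n) (2 + eps * t q))).
    apply: ler_sum => k _; apply: le_trans (F3 k q).
    by apply: ler_wpM2r => //.
  by rewrite /t sumr_const card_ord /m mulr_natl.
have F5 : forall p q, `|(mulmx (1%:M - delta_mx i i) b) p q| <= 4.
  move=> p q; rewrite /= mulmxBl mul1mx mxE [X in `|_ + X|]mxE mulmx_delta_l.
  case: eqP => [->|/eqP pi]; first by rewrite subrr normr0 ler0n.
  rewrite subr0; have := F3 p q; rewrite mxE (negbTE pi) mul1r => /le_trans; apply.
  apply: (@le_trans _ _ (2 + 2)); first by rewrite lerD.
  by rewrite -natrD.
have F6 := HK b _ 4 (ler0n _ 4) (HW b bA) F5.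
have F7 : forall q, `|a q i| < c^-1.
  move=> q; rewrite -(ltr_pXn2r (_ : 0 < 2)%N) ?nnegrE ?invr_ge0 ?normr_ge0 ?(ltW c0) //.
  apply: le_lt_trans (Qkk_ge a q i) _; apply: lt_le_trans (HQ i) _.
  rewrite mxE eqxx; apply: le_trans (lerD (lexx dl) edl) _.
  rewrite -mulr2n -mulr_natl exprVn; apply: ltW; exact: arith2 (exprn_gt0 _ c0).
have : 1 <= \sum_(q < n) 4 * K * c^-1.
  have H1 : 1 = `|(b *m a) i i| by rewrite ba mxE eqxx normr1.
  rewrite [X in X <= _]H1.
  rewrite mxE; apply: le_trans (ler_norm_sum _ _ _) _; apply: ler_sum => q0 _.
  by rewrite normrM; apply: ler_pM => //; apply: ltW; apply: F7.
rewrite sumr_const card_ord.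
have -> : 4 * K / c *+ n = (4 * K * n%:R) / c by rewrite -[_ *+ n]mulr_natr; ring.
rewrite ler_pdivlMr // mul1r => H.
have : 4 * K * n%:R < c.
  rewrite /c (_ : 4 * K * n%:R = (4 * n)%:R * K); first by rewrite ltrDl.
  by rewrite natrM; ring.
by move=> H2; have := lt_le_trans H2 H; rewrite ltxx.
Qed.

End Main.

Lemma deltaL_sum (C : numClosedFieldType) (n : nat) (x : 'M[C]_n) i :
  \sum_k x i k *: delta_mx i k = delta_mx i i *m x.
Proof.
apply/matrixP => p q; rewrite mulmx_delta_l summxE.
case: eqP => [->|/eqP pi].
  rewrite (bigD1 q) //= big1 ?addr0 => [|k kq]; rewrite !mxE ?eqxx /=.
    by rewrite mulr1.
  by rewrite eq_sym (negbTE kq) mulr0.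
by apply: big1 => k _; rewrite !mxE (negbTE pi) mulr0.
Qed.

Lemma deltaR_sum (C : numClosedFieldType) (n : nat) (x : 'M[C]_n) j :
  \sum_k x k j *: delta_mx k j = x *m delta_mx j j.
Proof.
apply/matrixP => p q; rewrite mulmx_delta_r summxE.
case: eqP => [->|/eqP qj].
  rewrite (bigD1 p) //= big1 ?addr0 => [|k kp]; rewrite !mxE ?eqxx /=.
    by rewrite mulr1.
  by rewrite eq_sym (negbTE kp) mulr0.
by apply: big1 => k _; rewrite !mxE (negbTE qj) andbF mulr0.
Qed.

Theorem lemma1 (C : numClosedFieldType) (n : nat) (A : {pred 'M[C]_n}) :
  logmodular A ->
  exists alpha beta : 'M[C]_n,
    [/\ (forall i : 'I_n, row i alpha != 0),
        (forall j : 'I_n, col j beta != 0)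
      & (forall i j : 'I_n,
           (\sum_(k < n) alpha i k *: delta_mx i k) \in A /\
           (\sum_(k < n) beta k j *: delta_mx k j) \in A)].
Proof.
move=> LA.
have [X HX] := fin_all_exists (fun i => row_elem LA i).
have [Y HY] := fin_all_exists (fun j => col_elem LA j).
have EX : forall i, \sum_k (\matrix_(i0, k0) X i0 i0 k0 : 'M[C]_n) i k *: delta_mx i k = X i.
  move=> i; have [_ _ H] := HX i.
  rewrite (eq_bigr (fun k => X i i k *: delta_mx i k)) => [|k _]; last by rewrite mxE.
  rewrite deltaL_sum; apply/eqP; rewrite eq_sym -subr_eq0 -[X in X - _]mul1mx -mulmxBl.
  by rewrite H.
have EY : forall j, \sum_k (\matrix_(k0, j0) Y j0 k0 j0 : 'M[C]_n) k j *: delta_mx k j = Y j.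
  move=> j; have [_ _ H] := HY j.
  rewrite (eq_bigr (fun k => Y j k j *: delta_mx k j)) => [|k _]; last by rewrite mxE.
  rewrite deltaR_sum; apply/eqP; rewrite eq_sym -subr_eq0 -[X in X - _]mulmx1 -mulmxBr.
  by rewrite H.
exists (\matrix_(i, k) X i i k), (\matrix_(k, j) Y j k j); split.
- move=> i; apply/eqP => H0; have [_ X0 _] := HX i; move/eqP: X0; apply.
  rewrite -EX big1 // => k _.
  by have := congr1 (fun M : 'rV[C]_n => M 0 k) H0; rewrite !mxE => ->; rewrite scale0r.
- move=> j; apply/eqP => H0; have [_ Y0 _] := HY j; move/eqP: Y0; apply.
  rewrite -EY big1 // => k _.
  by have := congr1 (fun M : 'cV[C]_n => M k 0) H0; rewrite !mxE => ->; rewrite scale0r.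
- move=> i j; rewrite EX EY; have [? _ _] := HX i; have [? _ _] := HY j; by split.
Qed.
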